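(* Let $f:[0,\infty)\to[0,\infty)$ be such that there exists $C\ge1$ with $f(s)\le Cf(t)$ and $f(t)\frac{s}{t}\le C(f(s)+1)$ for all $t>s\ge0$. Then there exists $A\ge1$ such that for every $x\in(0,\infty)$, $A^{-1}F(x)-A\le f(x)\le F(x)$, where $F$ is the least concave majorant of $f$.
   Context: The least concave majorant $F$ of $f$ is the smallest concave function $F$ on $[0,\infty)$ with $f\le F$. *)

(* Defs.v *)
From Stdlib Require Import Reals.
Open Scope R_scope.

Definition concave_on_nonneg (F : R -> R) : Prop :=
  forall x y l, 0 <= x -> 0 <= y -> 0 <= l <= 1 ->
    l * F x + (1 - l) * F y <= F (l * x + (1 - l) * y).

Definition concave_majorant (f F : R -> R) : Prop :=
  concave_on_nonneg F /\ (forall x, 0 <= x -> f x <= F x).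

Definition least_concave_majorant (f F : R -> R) : Prop :=
  concave_majorant f F /\
  (forall G, concave_majorant f G -> forall x, 0 <= x -> F x <= G x).

(* Main.v *)
Require Import Defs.
From Stdlib Require Import Reals Lra.
Open Scope R_scope.

Lemma line_majorant (f : R -> R) (C : R)
  (f_nonneg : forall x, 0 <= x -> 0 <= f x) (hC1 : 1 <= C)
  (hC : forall s t, 0 <= s -> s < t ->
       f s <= C * f t /\ f t * (s / t) <= C * (f s + 1)) (x0 : R) (hx0 : 0 < x0) :
  concave_majorant f (fun y => C * (f x0 + 1) * (1 + y / x0)).
Proof.
  split.
  - intros x y l _ _ _.
    assert (E : l * (C * (f x0 + 1) * (1 + x / x0)) + (1 - l) * (C * (f x0 + 1) * (1 + y / x0))
       = C * (f x0 + 1) * (1 + (l * x + (1 - l) * y) / x0)) by (field; lra).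
    lra.
  - intros y hy.
    assert (ha := f_nonneg x0 (Rlt_le _ _ hx0)).
    assert (hu : 0 <= y / x0) by (unfold Rdiv; apply Rmult_le_pos; [lra | left; apply Rinv_0_lt_compat; lra]).
    assert (hCa : 0 <= C * (f x0 + 1)) by nra.
    destruct (Rtotal_order y x0) as [Hlt | [Heq | Hgt]].
    + destruct (hC y x0 hy Hlt) as [H1 _]. nra.
    + subst y. nra.
    + destruct (hC x0 y (Rlt_le _ _ hx0) Hgt) as [_ H2].
      assert (hv : 0 < y / x0) by (apply Rdiv_lt_0_compat; lra).
      assert (E : f y = f y * (x0 / y) * (y / x0)) by (field; lra).
      assert (f y * (x0 / y) * (y / x0) <= C * (f x0 + 1) * (y / x0)).
      { apply Rmult_le_compat_r; lra. }
      nra.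
Qed.

Theorem proposition2p23 (f : R -> R)
  (f_nonneg : forall x, 0 <= x -> 0 <= f x)
  (hC : exists C, 1 <= C /\
     forall s t, 0 <= s -> s < t ->
       f s <= C * f t /\ f t * (s / t) <= C * (f s + 1)) :
  (exists F, least_concave_majorant f F) /\
  (forall F, least_concave_majorant f F ->
     exists A, 1 <= A /\
       forall x, 0 < x -> / A * F x - A <= f x /\ f x <= F x).
Proof.
  destruct hC as [C [hC1 hC]].
  split.
  - set (E := fun x v => exists G, concave_majorant f G /\ v = - G (Rmax 0 x)).
    assert (bnd : forall x, bound (E x)).
    { intros x. exists 0. intros v [G [[_ HG] ->]].
      assert (h0 : 0 <= Rmax 0 x) by apply Rmax_l.
      assert (h1 := HG _ h0). assert (h2 := f_nonneg _ h0). lra. }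
    assert (ne : forall x, exists v, E x v).
    { intros x. eexists. exists (fun y => C * (f 1 + 1) * (1 + y / 1)).
      split; [apply line_majorant; auto; lra | reflexivity]. }
    set (F := fun x => - proj1_sig (completeness (E x) (bnd x) (ne x))).
    assert (Fspec : forall x, is_lub (E x) (- F x)).
    { intros x. unfold F. rewrite Ropp_involutive.
      exact (proj2_sig (completeness (E x) (bnd x) (ne x))). }
    assert (least : forall G, concave_majorant f G -> forall x, 0 <= x -> F x <= G x).
    { intros G HG x hx. destruct (Fspec x) as [ub _].
      assert (h := ub (- G (Rmax 0 x)) (ex_intro _ G (conj HG eq_refl))).
      rewrite Rmax_right in h; lra. }
    exists F. split; [split|].
    + intros x y l hx hy hl.
      set (z := l * x + (1 - l) * y).
      assert (hz : 0 <= z) by (unfold z; nra).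
      destruct (Fspec z) as [_ lub].
      assert (H : - F z <= - (l * F x + (1 - l) * F y)).
      { apply lub. intros v [G [HG ->]]. rewrite Rmax_right by lra.
        assert (h1 := least G HG x hx). assert (h2 := least G HG y hy).
        destruct HG as [Hc _]. assert (h3 := Hc x y l hx hy hl). fold z in h3.
        nra. }
      lra.
    + intros x hx. destruct (Fspec x) as [_ lub].
      assert (H : - F x <= - f x).
      { apply lub. intros v [G [[_ HG] ->]]. rewrite Rmax_right by lra.
        assert (h := HG x hx). lra. }
      lra.
    + exact least.
  - intros F [[_ HFmaj] HFleast].
    exists (2 * C). split; [lra|].
    intros x hx.
    assert (HG := line_majorant f C f_nonneg hC1 hC x hx).
    assert (h := HFleast _ HG x (Rlt_le _ _ hx)). simpl in h.
    replace (x / x) with 1 in h by (field; lra).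
    assert (hf := f_nonneg x (Rlt_le _ _ hx)).
    split; [|apply HFmaj; lra].
    assert (h2 : / (2 * C) * F x <= / (2 * C) * (2 * C * (f x + 1))).
    { apply Rmult_le_compat_l. left; apply Rinv_0_lt_compat; lra. lra. }
    replace (/ (2 * C) * (2 * C * (f x + 1))) with (f x + 1) in h2 by (field; lra).
    lra.
Qed.
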